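(* Let $\mathcal G$ be a good pseudogroup on a compact metric space $X$, $\mathcal G_1$ a good generating set and $\mathcal G_2$ the compacted generating set. Then there exists $\rho>0$ such that for all $x_0,y_0\in X$: if $y_0\in\Phi^1_{\rho/2}(x_0)$, then $\Phi^1_{\rho/2}(x_0)\subset\Phi^2_\rho(y_0)$.
   Context: $\mathrm{Homeo}(X)$: homeomorphisms $g:D_g\to R_g$ between open subsets of $X$, composed on natural domains $D_{h\circ g}=g^{-1}(D_h)$. A pseudogroup is a subset of $\mathrm{Homeo}(X)$ containing $\mathrm{id}_X$, closed under composition, inversion, restriction to open subsets, and gluing along open covers of the domain. $\Gamma$ generates $\mathcal G$ if $\bigcup_{g\in\Gamma}(D_g\cup R_g)=X$ and $\mathcal G$ is exactly the set of $g\in\mathrm{Homeo}(X)$ locally equal near each point of $D_g$ to a finite composition of elements of $\Gamma$ and their inverses. A finite generating set is symmetric if it contains $\mathrm{id}_X$ and is closed under inverses; a finite symmetric generating set $\mathcal G_1$ is good if for each $g\in\mathcal G_1$ there is a compact $K_g\subset D_g$ with $\mathcal G_2=\{g|_{\mathrm{int}(K_g)}:g\in\mathcal G_1\}$ still generating $\mathcal G$ ($\mathcal G_2$ is the compacted generating set; $\mathcal G$ is good if it has a good generating set). For $i=1,2$: $\mathcal G^i_n=\{h_1\circ\cdots\circ h_n:h_j\in\mathcal G_i\}$, $\mathcal G^{i,x}_n=\{g\in\mathcal G^i_n:x\in D_g\}$, $\Phi^i_\delta(x)=\{y\in X: d(g(x),g(y))\le\delta\ \forall n\in\mathbb N,\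 \forall g\in\mathcal G^{i,x}_n\cap\mathcal G^{i,y}_n\}$. *)

(* Defs.v *)
From Stdlib Require Import Reals List.
Open Scope R_scope.
Set Implicit Arguments.

Section Defs.
Variable X : Type.
Variable d : X -> X -> R.

Definition is_metric : Prop :=
  (forall x y, 0 <= d x y) /\ (forall x y, d x y = 0 <-> x = y) /\
  (forall x y, d x y = d y x) /\ (forall x y z, d x z <= d x y + d y z).

Definition open (U : X -> Prop) : Prop :=
  forall x, U x -> exists e, 0 < e /\ forall y, d x y < e -> U y.

Definition interior (K : X -> Prop) : X -> Prop :=
  fun x => exists e, 0 < e /\ forall y, d x y < e -> K y.

Definition compact (K : X -> Prop) : Prop :=
  forall (I : Type) (U : I -> X -> Prop), (forall i, open (U i)) ->
    (forall x, K x -> exists i, U i x) ->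
    exists l : list I, forall x, K x -> exists i, In i l /\ U i x.

Definition compact_space : Prop := compact (fun _ => True).

Definition continuous_on (D : X -> Prop) (f : X -> X) : Prop :=
  forall x, D x -> forall e, 0 < e -> exists r, 0 < r /\
    forall y, D y -> d x y < r -> d (f x) (f y) < e.

(** A partial map: a domain D_g together with a (total) function whose values
    matter only on D_g.  Two representations denote the same partial map iff
    they are [heq]. *)
Definition PMap : Type := ((X -> Prop) * (X -> X))%type.

Definition pdom (g : PMap) : X -> Prop := fst g.
Definition pfn (g : PMap) : X -> X := snd g.
Definition prange (g : PMap) : X -> Prop :=
  fun y => exists x, pdom g x /\ pfn g x = y.

Definition heq (g h : PMap) : Prop :=
  (forall x, pdom g x <-> pdom h x) /\ (forall x, pdom g x -> pfn g x = pfn h x).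

Definition is_homeo (g : PMap) : Prop :=
  open (pdom g) /\ open (prange g) /\
  (forall x y, pdom g x -> pdom g y -> pfn g x = pfn g y -> x = y) /\
  continuous_on (pdom g) (pfn g) /\
  exists h, (forall x, pdom g x -> h (pfn g x) = x) /\ continuous_on (prange g) h.

Definition id_X : PMap := (fun _ => True, fun x => x).

Definition pcomp (h g : PMap) : PMap :=
  (fun x => pdom g x /\ pdom h (pfn g x), fun x => pfn h (pfn g x)).

Definition inverse_of (h g : PMap) : Prop :=
  (forall y, pdom h y <-> prange g y) /\
  (forall x, pdom g x -> pfn h (pfn g x) = x).

Definition restrict (g : PMap) (U : X -> Prop) : PMap :=
  (fun x => pdom g x /\ U x, pfn g).

Definition pseudogroup (P : PMap -> Prop) : Prop :=
  (* P is a set of partial maps (respects equality of partial maps) *)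
  (forall g h, P g -> heq g h -> P h) /\
  (forall g, P g -> is_homeo g) /\
  P id_X /\
  (forall g h, P g -> P h -> P (pcomp h g)) /\
  (forall g h, P g -> inverse_of h g -> P h) /\
  (forall g U, P g -> open U -> P (restrict g U)) /\
  (forall g (I : Type) (U : I -> X -> Prop), is_homeo g ->
     (forall i, open (U i)) -> (forall x, pdom g x -> exists i, U i x) ->
     (forall i, P (restrict g (U i))) -> P g).

Fixpoint wfn (w : list PMap) : X -> X :=
  match w with
  | nil => fun x => x
  | h :: w' => fun x => pfn h (wfn w' x)
  end.

Fixpoint wdom (w : list PMap) : X -> Prop :=
  match w with
  | nil => fun _ => True
  | h :: w' => fun x => wdom w' x /\ pdom h (wfn w' x)
  end.

Definition letter (Gamma : list PMap) (l : PMap) : Prop :=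
  In l Gamma \/ exists g, In g Gamma /\ inverse_of l g.

Definition generates (P : PMap -> Prop) (Gamma : list PMap) : Prop :=
  (forall g, In g Gamma -> is_homeo g) /\
  (forall x, exists g, In g Gamma /\ (pdom g x \/ prange g x)) /\
  (forall g, is_homeo g ->
     (P g <-> forall x, pdom g x -> exists U, open U /\ U x /\
        exists w : list PMap, (forall l, In l w -> letter Gamma l) /\
          forall z, U z -> pdom g z -> wdom w z /\ wfn w z = pfn g z)).

Definition symmetric_set (Gamma : list PMap) : Prop :=
  (exists g, In g Gamma /\ heq g id_X) /\
  (forall g, In g Gamma -> exists h, In h Gamma /\ inverse_of h g).

Definition compacted (G1 : list PMap) (K : PMap -> X -> Prop) : list PMap :=
  map (fun g => (interior (K g), pfn g)) G1.

Definition good_generating_set (P : PMap -> Prop) (G1 : list PMap)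
  (K : PMap -> X -> Prop) : Prop :=
  generates P G1 /\ symmetric_set G1 /\
  (forall g h, In g G1 -> In h G1 -> heq g h -> K g = K h) /\
  (forall g, In g G1 -> compact (K g) /\ forall x, K g x -> pdom g x) /\
  generates P (compacted G1 K).

Definition Phi (Gs : list PMap) (delta : R) (x : X) : X -> Prop :=
  fun y => forall w : list PMap, (forall h, In h w -> In h Gs) ->
    wdom w x -> wdom w y -> d (wfn w x) (wfn w y) <= delta.

End Defs.

(* Main.v *)
Require Import Defs.
From Stdlib Require Import Reals List Lra.
Open Scope R_scope.

Section Aux.
Variable X : Type.
Variable d : X -> X -> R.
Hypothesis Hd : is_metric d.

Lemma ball_open (a : X) (r : R) : Defs.open d (fun y => d a y < r).
Proof.
  destruct Hd as [H0 [H1 [H2 H3]]].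
  intros x Hx. exists (r - d a x). split; [lra|].
  intros y Hy. pose proof (H3 a x y). lra.
Qed.

Lemma lebesgue (K D : X -> Prop) : Defs.compact d K -> Defs.open d D ->
  (forall x, K x -> D x) ->
  exists e, 0 < e /\ forall a b, K a -> d a b < e -> D b.
Proof.
  intros HK HD HKD.
  destruct Hd as [H0 [H1 [H2 H3]]].
  set (I := {a : X & {r : R | 0 < r /\ forall y, d a y < r -> D y}}).
  set (U := fun i : I => fun y => d (projT1 i) y < proj1_sig (projT2 i) / 2).
  destruct (HK I U) as [l Hl].
  - intro i. apply ball_open.
  - intros x Kx. destruct (HD x (HKD x Kx)) as [r [Hr Hr']].
    exists (existT _ x (exist _ r (conj Hr Hr'))). unfold U; simpl.
    assert (d x x = 0) by (apply H1; reflexivity). lra.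
  - set (e := fold_right (fun i acc => Rmin (proj1_sig (projT2 i) / 2) acc) 1 l).
    assert (He : 0 < e /\ forall i, In i l -> e <= proj1_sig (projT2 i) / 2).
    { unfold e; clear e Hl. induction l as [|i l IH]; simpl.
      - split; [lra| tauto].
      - destruct IH as [IH1 IH2].
        pose proof (proj1 (proj2_sig (projT2 i))) as Hr.
        split.
        + apply Rmin_glb_lt; lra.
        + intros j [<-|Hj].
          * apply Rmin_l.
          * eapply Rle_trans; [apply Rmin_r|]. auto. }
    destruct He as [He1 He2].
    exists e. split; auto.
    intros a b Ka Hab. destruct (Hl a Ka) as [i [Hi Ui]].
    unfold U in Ui. pose proof (He2 i Hi).
    destruct i as [c [r [Hr Hr']]]; simpl in *.
    apply Hr'. pose proof (H3 c a b). lra.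
Qed.

Lemma list_min (A : Type) (l : list A) (P : A -> R -> Prop) :
  (forall g e e', P g e -> 0 < e' <= e -> P g e') ->
  (forall g, In g l -> exists e, 0 < e /\ P g e) ->
  exists e, 0 < e /\ forall g, In g l -> P g e.
Proof.
  intros Hm. induction l as [|g l IH]; intros H.
  - exists 1. split; [lra| simpl; tauto].
  - destruct IH as [e1 [He1 Hl]]. { intros; apply H; simpl; auto. }
    destruct (H g (or_introl eq_refl)) as [e2 [He2 Hg]].
    exists (Rmin e1 e2). split. { apply Rmin_glb_lt; lra. }
    intros h [<-|Hh].
    + apply (Hm _ e2); auto. split; [apply Rmin_glb_lt; lra| apply Rmin_r].
    + apply (Hm _ e1); auto. split; [apply Rmin_glb_lt; lra| apply Rmin_l].
Qed.

Lemma lift_word (A B : Type) (f : A -> B) (l : list A) (w : list B) :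
  (forall h, In h w -> In h (map f l)) ->
  exists w', (forall g, In g w' -> In g l) /\ map f w' = w.
Proof.
  induction w as [|h w IH]; intros H.
  - exists nil. simpl; split; tauto.
  - destruct IH as [w' [H1 H2]]. { intros; apply H; simpl; auto. }
    destruct (in_map_iff f l h) as [Hi _].
    destruct (Hi (H h (or_introl eq_refl))) as [g [Hg1 Hg2]].
    exists (g :: w'). simpl. split.
    + intros g' [<-|Hg']; auto.
    + congruence.
Qed.

Lemma wfn_map (K : PMap X -> X -> Prop) (w : list (PMap X)) t :
  wfn (map (fun g => (Defs.interior d (K g), pfn g)) w) t = wfn w t.
Proof. induction w as [|g w IH]; simpl; auto. rewrite IH. reflexivity. Qed.

Lemma key (G1 : list (PMap X)) (K : PMap X -> X -> Prop) (rho : R)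
  (HK : forall g, In g G1 -> forall x, K g x -> pdom g x)
  (HL : forall g, In g G1 -> forall a b, K g a -> d a b < rho -> pdom g b)
  (x y : X) (Hxy : Phi d G1 (rho / 2) x y) (Hr : 0 < rho) :
  forall w, (forall g, In g w -> In g G1) ->
    wdom (map (fun g => (Defs.interior d (K g), pfn g)) w) y ->
    wdom w x /\ wdom w y.
Proof.
  destruct Hd as [H0 [H1 [H2 H3]]].
  induction w as [|g w IH]; intros Hw Hdom.
  - simpl; auto.
  - simpl in Hdom. destruct Hdom as [Hd1 Hd2].
    assert (Hw' : forall g, In g w -> In g G1) by (intros; apply Hw; simpl; auto).
    destruct (IH Hw' Hd1) as [Hx Hy].
    rewrite wfn_map in Hd2. unfold pdom in Hd2; simpl in Hd2.
    destruct Hd2 as [e [He HKe]].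
    assert (Kp : K g (wfn w y)).
    { apply HKe. assert (d (wfn w y) (wfn w y) = 0) by (apply H1; auto). lra. }
    assert (Hgin : In g G1) by (apply Hw; simpl; auto).
    simpl. split; split; [exact Hx| |exact Hy| ].
    + apply (HL g Hgin (wfn w y)); auto.
      pose proof (Hxy w Hw' Hx Hy). rewrite H2. lra.
    + apply (HK g Hgin); auto.
Qed.

End Aux.

Theorem mainTheorem8 (X : Type) (d : X -> X -> R)
  (Hd : is_metric d) (Hc : compact_space d)
  (G : PMap X -> Prop) (HG : pseudogroup d G)
  (G1 : list (PMap X)) (K : PMap X -> X -> Prop)
  (HG1 : good_generating_set d G G1 K) :
  exists rho, 0 < rho /\
    forall x0 y0 : X, Phi d G1 (rho / 2) x0 y0 ->
      forall z, Phi d G1 (rho / 2) x0 z -> Phi d (compacted d G1 K) rho y0 z.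
Proof.
  destruct HG1 as [Hgen [_ [_ [HK _]]]].
  destruct Hgen as [Hhom _].
  destruct (list_min _ G1 (fun g e => forall a b, K g a -> d a b < e -> pdom g b))
    as [rho [Hr HL]].
  { intros g e e' H [H1 H2] a b Ka Hab. apply (H a b Ka). lra. }
  { intros g Hg. destruct (HK g Hg) as [Kc KD].
    apply (lebesgue _ _ Hd); auto. destruct (Hhom g Hg) as [Ho _]. exact Ho. }
  exists rho. split; auto.
  intros x0 y0 Hy z Hz w Hw Hwy Hwz.
  destruct (lift_word _ _ (fun g => (Defs.interior d (K g), pfn g)) G1 w Hw) as [w' [Hw' <-]].
  assert (HK' : forall g, In g G1 -> forall x, K g x -> pdom g x)
    by (intros g Hg; apply (HK g Hg)).
  destruct (key _ _ Hd _ _ _ HK' HL _ _ Hy Hr w' Hw' Hwy) as [Hx Hy'].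
  destruct (key _ _ Hd _ _ _ HK' HL _ _ Hz Hr w' Hw' Hwz) as [_ Hz'].
  rewrite !wfn_map.
  destruct Hd as [H0 [H1 [H2 H3]]].
  pose proof (Hy w' Hw' Hx Hy') as A1. pose proof (Hz w' Hw' Hx Hz') as A2.
  pose proof (H3 (wfn w' y0) (wfn w' x0) (wfn w' z)) as A3.
  rewrite (H2 (wfn w' y0) (wfn w' x0)) in A3. lra.
Qed.
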